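(* Let $M$ be a right $R$-module such that for every cyclic submodule $X$ of $M$ there is a decomposition $M=D\oplus D'$ in which $D'$ is a supplement of $X$ in $M$ and $D$ is $D'$-projective. Then $M$ is principally Goldie*-lifting.
   Context: $R$ is an associative ring with identity; modules are unital right $R$-modules. $K\ll N$ means $K$ is small in $N$. A submodule $S$ is a supplement of $X$ in $M$ if $X+S=M$ and $X\cap S\ll S$. A module $A$ is $B$-projective if every homomorphism $A\to B/C$ ($C\le B$) lifts to a homomorphism $A\to B$. For submodules $X,Y$ of $M$, $X\,\beta^*\,Y$ means $(X+Y)/X\ll M/X$ and $(X+Y)/Y\ll M/Y$. $M$ is principally Goldie*-lifting if for every cyclic submodule $X$ of $M$ there is a direct summand $D$ of $M$ with $X\,\beta^*\,D$. *)

(* Defs.v *)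
From HB Require Import structures.
From mathcomp Require Import all_boot all_order all_algebra.
Set Implicit Arguments. Unset Strict Implicit. Unset Printing Implicit Defensive.
Import GRing.Theory.
Local Open Scope ring_scope.

Section RightModules.
Variables (R : pzRingType) (M : zmodType) (act : M -> R -> M).

Definition right_module : Prop :=
  [/\ (forall (x y : M) r, act (x + y) r = act x r + act y r),
      (forall (x : M) r s, act x (r + s) = act x r + act x s),
      (forall (x : M) r s, act x (r * s) = act (act x r) s)
    & (forall x : M, act x 1 = x)].

Definition submodule (X : M -> Prop) : Prop :=
  [/\ X 0,
      (forall x y, X x -> X y -> X (x + y)),
      (forall x, X x -> X (- x))
    & (forall x r, X x -> X (act x r))].

Definition subm (X Y : M -> Prop) : Prop := forall x, X x -> Y x.
Definition eqm (X Y : M -> Prop) : Prop := forall x, X x <-> Y x.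
Definition fullm : M -> Prop := fun _ => True.
Definition zerom : M -> Prop := fun x => x = 0.
Definition summ (X Y : M -> Prop) : M -> Prop :=
  fun z => exists x y, [/\ X x, Y y & z = x + y].
Definition capm (X Y : M -> Prop) : M -> Prop := fun z => X z /\ Y z.

Definition cyclicm (x : M) : M -> Prop := fun z => exists r, z = act x r.

Definition small (K N : M -> Prop) : Prop :=
  forall L, submodule L -> subm L N -> eqm (summ K L) N -> eqm L N.

(* K/X << M/X, for submodules X <= K of M, via the correspondence between
   submodules of M/X and submodules of M containing X *)
Definition small_quot (K X : M -> Prop) : Prop :=
  forall L, submodule L -> subm X L -> eqm (summ K L) fullm -> eqm L fullm.

Definition direct_decomp (D D' : M -> Prop) : Prop :=
  [/\ submodule D, submodule D', eqm (summ D D') fullm & eqm (capm D D') zerom].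

Definition direct_summand (D : M -> Prop) : Prop :=
  exists D', direct_decomp D D'.

Definition supplement (S X : M -> Prop) : Prop :=
  [/\ submodule S, eqm (summ X S) fullm & small (capm X S) S].

(* A homomorphism A -> B/C (C <= B a submodule) is represented by a
   function g : M -> M whose values on A lie in B and which is additive and
   R-linear on A modulo C (a choice of representatives); it lifts if there
   is an R-linear h : A -> B (represented as h : M -> M, only its values on A
   matter) with h a - g a in C for all a in A. *)
Definition rel_projective (A B : M -> Prop) : Prop :=
  forall (C : M -> Prop) (g : M -> M),
    submodule C -> subm C B ->
    (forall a, A a -> B (g a)) ->
    (forall a b, A a -> A b -> C (g (a + b) - (g a + g b))) ->
    (forall a r, A a -> C (g (act a r) - act (g a) r)) ->
    exists h : M -> M,
      [/\ (forall a, A a -> B (h a)),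
          (forall a b, A a -> A b -> h (a + b) = h a + h b),
          (forall a r, A a -> h (act a r) = act (h a) r)
        & (forall a, A a -> C (h a - g a))].

Definition beta_star (X Y : M -> Prop) : Prop :=
  small_quot (summ X Y) X /\ small_quot (summ X Y) Y.

Definition principally_goldie_star_lifting : Prop :=
  forall x : M, exists D, direct_summand D /\ beta_star (cyclicm x) D.

End RightModules.

(* Main.v *)
Require Import Defs.
From HB Require Import structures.
From mathcomp Require Import all_boot all_order all_algebra.
From Stdlib Require Import ClassicalEpsilon.
Local Open Scope ring_scope.
Import GRing.Theory.
Lemma E1 (M : zmodType) (p q p1 q1 p2 q2 : M) :
  (p - q) - ((p1 - q1) + (p2 - q2)) = (p - (p1+p2)) - (q - (q1+q2)).
Proof. rewrite !opprD !opprK !addrA.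
rewrite (addrAC p (-q)) (addrAC _ (-q)) (addrAC _ (-q)) (addrAC _ (-q)).
rewrite [in RHS](addrAC _ (-q) q1) [in RHS](addrAC _ (-q) q2); congr (_ - q).
by rewrite (addrAC (p - p1) q1 (-p2)). Qed.
Lemma E2 (M : zmodType) (p q s : M) : (p - q) - (s - q) = p - s.
Proof. by rewrite opprB addrA subrK. Qed.
Lemma E4 (M : zmodType) (p q s : M) : p + (s - (p - q)) = q + s.
Proof. by rewrite opprB addrA addrC addrA subrK. Qed.
Lemma E5 (M : zmodType) (d e d' : M) : (d + e) + (d' - e) = d + d'.
Proof. by rewrite addrA addrAC addrK. Qed.
Lemma E6 (M : zmodType) (a1 d1 a0 l : M) : ((a1 + d1) + a0) + l - d1 = (a1 + a0) + l.
Proof. by rewrite (addrAC a1 d1 a0) (addrAC (a1 + a0) d1 l) addrK. Qed.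

Lemma sub_sub {R : pzRingType} {M : zmodType} {act : M -> R -> M} (X : M -> Prop) :
  submodule act X -> forall x y, X x -> X y -> X (x - y).
Proof. by case=> _ hD hN _ x y hx hy; apply: hD => //; apply: hN. Qed.

Lemma act0r {R : pzRingType} {M : zmodType} {act : M -> R -> M} :
  right_module act -> forall x, act x 0 = 0.
Proof.
case=> _ h2 _ _ x. have := h2 x 0 0; rewrite addr0 => e.
by have := congr1 (fun z => z - act x 0) e; rewrite subrr addrK.
Qed.

Lemma act0l {R : pzRingType} {M : zmodType} {act : M -> R -> M} :
  right_module act -> forall r, act 0 r = 0.
Proof.
case=> h1 _ _ _ r. have := h1 0 0 r; rewrite addr0 => e.
by have := congr1 (fun z => z - act 0 r) e; rewrite subrr addrK.
Qed.

Lemma actNl {R : pzRingType} {M : zmodType} {act : M -> R -> M} :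
  right_module act -> forall x r, act (- x) r = - act x r.
Proof.
move=> rm x r; have := rm; case=> h1 _ _ _.
have := h1 x (- x) r; rewrite subrr (act0l rm) => e.
by apply/eqP; rewrite -addr_eq0 addrC -e.
Qed.

Lemma actNr {R : pzRingType} {M : zmodType} {act : M -> R -> M} :
  right_module act -> forall x r, act x (- r) = - act x r.
Proof.
move=> rm x r; have := rm; case=> _ h2 _ _.
have := h2 x r (- r); rewrite subrr (act0r rm) => e.
by apply/eqP; rewrite -addr_eq0 addrC -e.
Qed.

Lemma cyclic_sub {R : pzRingType} {M : zmodType} {act : M -> R -> M} x :
  right_module act -> submodule act (cyclicm act x).
Proof.
move=> rm; have := rm; case=> h1 h2 h3 h4; split.
- by exists 0; rewrite (act0r rm).
- by move=> _ _ [r ->] [s ->]; exists (r + s); rewrite h2.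
- by move=> _ [r ->]; exists (- r); rewrite (actNr rm).
- by move=> _ s [r ->]; exists (r * s); rewrite h3.
Qed.

Lemma cap_sub {R : pzRingType} {M : zmodType} {act : M -> R -> M} X Y :
  submodule act X -> submodule act Y -> submodule act (capm X Y).
Proof.
case=> a1 a2 a3 a4 [b1 b2 b3 b4]; split.
- by split.
- by move=> x y [? ?] [? ?]; split; auto.
- by move=> x [? ?]; split; auto.
- by move=> x r [? ?]; split; auto.
Qed.

Theorem proposition3p9 (R : pzRingType) (M : zmodType) (act : M -> R -> M) :
  right_module act ->
  (forall x : M, exists D D' : M -> Prop,
      [/\ direct_decomp act D D',
          supplement act D' (cyclicm act x)
        & rel_projective act D D']) ->
  principally_goldie_star_lifting act.
Proof.
move=> rm H x.
have [act_add act_radd act_mul act_1] := rm.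
case: (H x) => D [D' [[sD sD' DD' DcapD'] [_ XD' smallC] proj]].
set X := cyclicm act x.
have sX : submodule act X by apply: cyclic_sub.
have dec : forall m : M, {p : M * M | [/\ X p.1, D' p.2 & m = p.1 + p.2]}.
  move=> m; apply: constructive_indefinite_description.
  have [_ /(_ I) [a [b [Xa Db e]]]] := XD' m. by exists (a, b).
pose xx m := (sval (dec m)).1.
have decP m : [/\ X (xx m), D' (m - xx m) & m = xx m + (m - xx m)].
  rewrite /xx; case: (dec m) => [[a b]] /= [Xa Db e]; split => //.
  + by rewrite {1}e addrAC subrr add0r.
  + by rewrite addrC subrK.
have decX m : X (xx m) by case: (decP m).
have decD m : D' (m - xx m) by case: (decP m).
pose g m := xx m - m.
pose C := capm X D'.
have sC : submodule act C by apply: cap_sub.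
have [sD'0 sD'D sD'N sD'A] := sD'.
have [sX0 sXD sXN sXA] := sX.
have [h [hB hadd hact hC]] : exists h : M -> M,
      [/\ (forall a, D a -> D' (h a)),
          (forall a b, D a -> D b -> h (a + b) = h a + h b),
          (forall a r, D a -> h (act a r) = act (h a) r)
        & (forall a, D a -> C (h a - g a))].
  apply: proj => //.
  - by move=> ? [].
  - move=> a _; rewrite /g -opprB; exact: sD'N.
  - move=> a b _ _; rewrite /g E1 subrr subr0; split.
    + by apply: (@sub_sub _ _ _ _ sX); [apply: decX | apply: (sXD); apply: decX].
    + have e := @E1 _ (a + b) (xx (a + b)) a (xx a) b (xx b).
      rewrite subrr sub0r in e.
      rewrite -[X in D' X]opprK -e; apply: (sD'N).
      by apply: (@sub_sub _ _ _ _ sD'); [apply: decD | apply: (sD'D); apply: decD].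
  - move=> a r _; rewrite /g; split.
    + rewrite act_add (actNl rm) E2.
      by apply: (@sub_sub _ _ _ _ sX); [apply: decX | apply: (sXA); apply: decX].
    + rewrite -[xx (act a r) - _]opprB -[xx a - a]opprB (actNl rm).
      by apply: (@sub_sub _ _ _ _ sD'); apply: (sD'N); [apply: decD | apply: (sD'A); apply: decD].
have [sD0 sDD sDN sDA] := sD.
have h0 : h 0 = 0.
  have := hadd 0 0 sD0 sD0; rewrite addr0 => e.
  by have := congr1 (fun z => z - h 0) e; rewrite subrr addrK.
have hN a : D a -> h (- a) = - h a.
  move=> Da; have := hadd a (- a) Da (sDN a Da); rewrite subrr h0 => e.
  by apply/eqP; rewrite -addr_eq0 addrC -e.
pose A m := exists a, D a /\ m = a + h a.
have sA : submodule act A.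
  split.
  - by exists 0; split => //; rewrite h0 addr0.
  - move=> _ _ [a [Da ->]] [b [Db ->]]; exists (a + b); split; first exact: sDD.
    by rewrite hadd // addrACA.
  - move=> _ [a [Da ->]]; exists (- a); split; first exact: sDN.
    by rewrite hN // opprD.
  - move=> _ r [a [Da ->]]; exists (act a r); split; first exact: sDA.
    by rewrite hact // act_add.
have AX : subm A X.
  move=> _ [a [Da ->]]. have [hCX _] := hC a Da.
  rewrite -(@E4 _ (xx a) a (h a)). by apply: (sXD); [apply: decX | exact: hCX].
have AD' : direct_decomp act A D'.
  split => //.
  - move=> m; split => // _.
    have [_ /(_ I) [d [d' [Dd Dd' ->]]]] := DD' m.
    exists (d + h d), (d' - h d); split.
    + by exists d.
    + by apply: (@sub_sub _ _ _ _ sD') => //; apply: hB.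
    + by rewrite E5.
  - move=> m; split.
    + case=> [[a [Da ->]] Dm].
      have Da' : D' a.
        rewrite -(addrK (h a) a); apply: (@sub_sub _ _ _ _ sD') => //; exact: hB.
      have a0 : a = 0 by apply: (DcapD' a).1; split.
      by rewrite /zerom a0 h0 addr0.
    + move=> ->; split => //; by exists 0; split => //; rewrite h0 addr0.
have [_ _ AD'full _] := AD'.
exists A; split; first by exists D'.
split.
- move=> L sL XL full m; split => // _.
  have [_ /(_ I) [s [l [[x0 [a0 [Xx0 Aa0 ->]]] Ll ->]]]] := full m.
  have [_ sLD _ _] := sL. apply: (sLD) => //. apply: (sLD); [exact: XL | apply: (XL); exact: AX].
- move=> L sL AL full. have [sL0 sLD sLN sLA] := sL.
  have DL : subm D' L.
    have e := smallC (capm L D') (@cap_sub _ _ _ _ _ sL sD') (fun _ p => p.2).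
    suff ee : eqm (summ (capm X D') (capm L D')) D'.
      by move=> m Dm; have [_ /(_ Dm) []] := e ee m.
    move=> m; split.
    + by case=> [c [l [[_ Dc] [_ Dl] ->]]]; apply: (sD'D).
    + move=> Dm.
      have [_ /(_ I) [s [l [[x0 [a0 [Xx0 Aa0 ->]]] Ll em]]]] := full m.
      have [_ /(_ I) [a1 [d1 [Aa1 Dd1 ex0]]]] := AD'full x0.
      exists d1, (m - d1); split.
      * split => //. rewrite -(addKr a1 d1) -ex0. apply: (sXD) => //. apply: (sXN); exact: AX.
      * split; last by apply: (@sub_sub _ _ _ _ sD').
        rewrite em ex0 E6. apply: (sLD) => //. by apply: (sLD); apply: (AL).
      * by rewrite addrC subrK.
  move=> m; split => // _.
  have [_ /(_ I) [a [d' [Aa Dd ->]]]] := AD'full m.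
  by apply: (sLD); [apply: (AL) | apply: (DL)].
Qed.
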